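(* The Funk–Finsler metric $\mathcal{F}$ on the Klein unit disc $\mathbb{D}_K(1)$ is a Douglas metric which is not a Berwald metric.
   Context: $r=\frac{e^2-1}{e^2+1}$, $\mathbb{D}_K(1)=\{x\in\mathbb{R}^2:|x|<r\}$, and $\mathcal{F}(x,\xi)=\frac{\sqrt{(r^2-|x|^2)|\xi|^2+\langle x,\xi\rangle^2}}{r^2-|x|^2}+\frac{(1-r^2)\langle x,\xi\rangle}{(r^2-|x|^2)(1-|x|^2)}$. A Finsler metric is Berwald if its spray coefficients $G^i(x,\xi)$ are quadratic in $\xi$ at each $x$; it is Douglas if $G^i\xi^j-G^j\xi^i$ is a homogeneous polynomial of degree $3$ in $\xi$ at each $x$. Spray coefficients: $G^i=\frac14g^{i\ell}\{[F^2]_{x^k\xi^\ell}\xi^k-[F^2]_{x^\ell}\}$. *)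

(* Defs.v *)
From Stdlib Require Import Reals.
From Coquelicot Require Import Coquelicot.
Open Scope R_scope.

(* Points of R^2 are pairs; coordinate index k is 0 (first) or 1 (second). *)
Definition coord (v : R * R) (k : nat) : R :=
  match k with O => fst v | _ => snd v end.
Definition upd (v : R * R) (k : nat) (t : R) : R * R :=
  match k with O => (t, snd v) | _ => (fst v, t) end.

Definition inner (u v : R * R) : R := fst u * fst v + snd u * snd v.
Definition nrm2 (u : R * R) : R := inner u u.

Definition r : R := (exp 2 - 1) / (exp 2 + 1).

Definition inDK (x : R * R) : Prop := sqrt (nrm2 x) < r.

Definition FF (x xi : R * R) : R :=
  sqrt ((r ^ 2 - nrm2 x) * nrm2 xi + (inner x xi) ^ 2) / (r ^ 2 - nrm2 x)
  + (1 - r ^ 2) * inner x xi / ((r ^ 2 - nrm2 x) * (1 - nrm2 x)).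

Definition dx (k : nat) (f : R * R -> R * R -> R) (x xi : R * R) : R :=
  Derive (fun t => f (upd x k t) xi) (coord x k).
Definition dxi (l : nat) (f : R * R -> R * R -> R) (x xi : R * R) : R :=
  Derive (fun t => f x (upd xi l t)) (coord xi l).

Definition sq (L : R * R -> R * R -> R) : R * R -> R * R -> R :=
  fun x xi => (L x xi) ^ 2.

Definition gt (L : R * R -> R * R -> R) (i j : nat) (x xi : R * R) : R :=
  / 2 * dxi i (dxi j (sq L)) x xi.

Definition gdet L x xi :=
  gt L 0 0 x xi * gt L 1 1 x xi - gt L 0 1 x xi * gt L 1 0 x xi.
Definition ginv (L : R * R -> R * R -> R) (i j : nat) (x xi : R * R) : R :=
  match i, j with
  | O, O => gt L 1 1 x xi / gdet L x xi
  | O, _ => - gt L 0 1 x xi / gdet L x xi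
  | _, O => - gt L 1 0 x xi / gdet L x xi
  | _, _ => gt L 0 0 x xi / gdet L x xi
  end.

Definition sum2 (f : nat -> R) : R := f 0%nat + f 1%nat.

Definition G (L : R * R -> R * R -> R) (i : nat) (x xi : R * R) : R :=
  / 4 * sum2 (fun l => ginv L i l x xi *
      (sum2 (fun k => dx k (dxi l (sq L)) x xi * coord xi k)
       - dx l (sq L) x xi)).

Definition IsBerwald (L : R * R -> R * R -> R) : Prop :=
  forall x, inDK x -> forall i : nat, (i = 0%nat \/ i = 1%nat) ->
    exists c0 c1 c2 c3 c4 c5 : R, forall xi : R * R, xi <> (0, 0) ->
      G L i x xi = c0 + c1 * fst xi + c2 * snd xi
                   + c3 * fst xi ^ 2 + c4 * fst xi * snd xi + c5 * snd xi ^ 2.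

(* Douglas: at each x, G^1 xi^2 - G^2 xi^1 is a homogeneous cubic in xi
   (in dimension 2 this is the only nontrivial pair i,j). *)
Definition IsDouglas (L : R * R -> R * R -> R) : Prop :=
  forall x, inDK x ->
    exists c0 c1 c2 c3 : R, forall xi : R * R, xi <> (0, 0) ->
      G L 0 x xi * snd xi - G L 1 x xi * fst xi
      = c0 * fst xi ^ 3 + c1 * fst xi ^ 2 * snd xi
        + c2 * fst xi * snd xi ^ 2 + c3 * snd xi ^ 3.

(* Main.v *)
Require Import Defs.
From Stdlib Require Import Reals Lra.
From Coquelicot Require Import Coquelicot.
Open Scope R_scope.

Definition av (x : R*R) := r^2 - nrm2 x.
Definition bv (x : R*R) := 1 - nrm2 x.
Definition Qv x y := av x * nrm2 y + inner x y ^ 2.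
Definition Sv x y := sqrt (Qv x y).
Definition cc := 1 - r^2.
Definition dl (i l : nat) : R := match i, l with O,O => 1 | S _, S _ => 1 | _,_ => 0 end.
Definition uv l x y := coord y l + inner x y * coord x l / av x.
Definition Fy l x y := uv l x y / Sv x y + cc * coord x l / (av x * bv x).
Definition Fx k x y := (inner x y * coord y k - coord x k * nrm2 y)/(Sv x y * av x)
  + 2*coord x k*Sv x y/(av x^2) + cc*coord y k/(av x*bv x)
  + 2*cc*inner x y*coord x k*(av x + bv x)/(av x^2*bv x^2).
Definition Fyy i l x y := (dl i l + coord x i*coord x l/av x)/Sv x y
  - uv l x y * uv i x y * av x / Sv x y^3.
Definition Fyx k l x y := (coord y k*coord x l/av x + inner x y*dl k l/av x
   + 2*inner x y*coord x l*coord x k/av x^2)/Sv x y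
  - uv l x y*(inner x y*coord y k - coord x k*nrm2 y)/Sv x y^3
  + cc*dl k l/(av x*bv x) + 2*cc*coord x l*coord x k*(av x+bv x)/(av x^2*bv x^2).
Definition Cd x y := 0 < av x /\ 0 < bv x /\ 0 < Qv x y.

Ltac fin := unfold Rminus in *; match goal with |- context [sqrt ?q] =>
   assert (0 < sqrt q) by (apply sqrt_lt_R0; lra); set (S := sqrt q) in * end;
   field; repeat split; intro; nra.
Ltac side := repeat split; try lra; try (intro; nra);
  try (apply Rgt_not_eq, sqrt_lt_R0; lra);
  try (apply Rgt_not_eq; apply Rlt_gt; apply pow_lt; apply sqrt_lt_R0; lra).
Ltac prep := unfold Cd, Fy, Fx, Fyy, Fyx, uv, dl, Sv, Qv, av, bv, cc, FF, nrm2, inner.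

Lemma dFy_y (i : nat) x y : Cd x y -> is_derive (fun t => FF x (upd y i t)) (coord y i) (Fy i x y).
Proof.
destruct x as [x1 x2], y as [y1 y2]; prep; intros [Ha [Hb HQ]].
destruct i as [|i]; simpl in *; auto_derive; try (side; fail); fin.
Qed.
Lemma dFx_x (k : nat) x y : Cd x y -> is_derive (fun t => FF (upd x k t) y) (coord x k) (Fx k x y).
Proof.
destruct x as [x1 x2], y as [y1 y2]; prep; intros [Ha [Hb HQ]].
destruct k as [|k]; simpl in *; auto_derive; try (side; fail); fin.
Qed.
Lemma dFyy (i l : nat) x y : Cd x y -> is_derive (fun t => Fy l x (upd y i t)) (coord y i) (Fyy i l x y).
Proof.
destruct x as [x1 x2], y as [y1 y2]; prep; intros [Ha [Hb HQ]].
destruct i as [|i]; destruct l as [|l]; simpl in *; auto_derive; try (side; fail); fin.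
Qed.
Lemma dFyx (k l : nat) x y : Cd x y -> is_derive (fun t => Fy l (upd x k t) y) (coord x k) (Fyx k l x y).
Proof.
destruct x as [x1 x2], y as [y1 y2]; prep; intros [Ha [Hb HQ]].
destruct k as [|k]; destruct l as [|l]; simpl in *; auto_derive; try (side; fail); fin.
Qed.
Ltac alg := unfold Rminus in *; match goal with |- context [sqrt ?q] =>
   assert (HS0: 0 < sqrt q) by (apply sqrt_lt_R0; first [lra|nra]);
   assert (HS2: sqrt q ^ 2 = q) by (rewrite <- Rsqr_pow2; apply Rsqr_sqrt; first [lra|nra]);
   set (SS := sqrt q) in *;
   field_simplify_eq; [ |repeat split; intro; nra];
   assert (E8 : SS^8 = q^4) by (rewrite <- HS2; ring);
   assert (E7 : SS^7 = q^3*SS) by (rewrite <- HS2; ring);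
   assert (E6 : SS^6 = q^3) by (rewrite <- HS2; ring);
   assert (E5 : SS^5 = q^2*SS) by (rewrite <- HS2; ring);
   assert (E4 : SS^4 = q^2) by (rewrite <- HS2; ring);
   assert (E3 : SS^3 = q*SS) by (rewrite <- HS2; ring);
   try rewrite E8; try rewrite E7; try rewrite E6; try rewrite E5; try rewrite E4;
   try rewrite E3; try rewrite HS2; ring end.

Lemma euler1 x y : Cd x y -> sum2 (fun j => Fy j x y * coord y j) = FF x y.
Proof.
destruct x as [x1 x2], y as [y1 y2]; unfold sum2; prep; intros [Ha [Hb HQ]]; simpl in *.
alg.
Qed.
Lemma euler2 l x y : Cd x y -> sum2 (fun j => Fyy l j x y * coord y j) = 0.
Proof.
destruct x as [x1 x2], y as [y1 y2]; unfold sum2; prep; intros [Ha [Hb HQ]]; simpl in *.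
destruct l as [|l]; simpl in *; alg.
Qed.
Lemma hamel l x y : Cd x y -> sum2 (fun k => Fyx k l x y * coord y k) = Fx l x y.
Proof.
destruct x as [x1 x2], y as [y1 y2]; unfold sum2; prep; intros [Ha [Hb HQ]]; simpl in *.
destruct l as [|l]; simpl in *; alg.
Qed.

Lemma loc_pos (f : R -> R) t0 : (forall t, ex_derive f t) -> 0 < f t0 -> locally t0 (fun t => 0 < f t).
Proof.
intros Hd Hp.
pose proof (@ex_derive_continuous R_AbsRing R_NormedModule f t0 (Hd t0)) as Hc.
assert (L: locally (f t0) (fun u : R => 0 < u)) by (apply (open_gt 0); exact Hp).
exact (Hc _ L).
Qed.

Lemma upd_id y i : upd y i (coord y i) = y.
Proof. destruct y, i; reflexivity. Qed.

Lemma loc_y i x y : Cd x y -> locally (coord y i) (fun t => Cd x (upd y i t)).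
Proof.
intros [Ha [Hb HQ]].
assert (H : locally (coord y i) (fun t => 0 < Qv x (upd y i t))).
{ apply loc_pos; [|rewrite upd_id; exact HQ].
  intro t; destruct x, y, i; unfold Qv, av, nrm2, inner; simpl; auto_derive; auto. }
apply (filter_imp (fun t => 0 < Qv x (upd y i t))); [intros t Ht; unfold Cd; auto | exact H].
Qed.

Lemma loc_x k x y : Cd x y -> locally (coord x k) (fun t => Cd (upd x k t) y).
Proof.
intros [Ha [Hb HQ]]. unfold Cd.
apply filter_and; [|apply filter_and];
  (apply loc_pos; [intro t; destruct x, y, k; unfold Qv, av, bv, nrm2, inner; simpl; auto_derive; auto
   | rewrite upd_id; assumption]).
Qed.

Lemma prod2 (f g : R -> R) x df dg : is_derive f x df -> is_derive g x dg ->
  is_derive (fun t => 2*f t*g t) x (2*df*g x + 2*f x*dg).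
Proof.
intros Hf Hg.
pose proof (is_derive_mult f g x df dg Hf Hg (fun n m => Rmult_comm n m)) as H.
pose proof (is_derive_scal _ x 2 _ H) as H2.
eapply is_derive_ext; [|replace (2*df*g x + 2*f x*dg) with (2 * (plus (mult df (g x)) (mult (f x) dg))); [exact H2|]].
- intro t; simpl. unfold mult; simpl; ring.
- unfold plus, mult; simpl; ring.
Qed.

Lemma D1 l x y : Cd x y -> dxi l (sq FF) x y = 2*FF x y*Fy l x y.
Proof.
intro H; unfold dxi, sq. apply is_derive_unique.
pose proof (is_derive_pow _ 2 _ _ (dFy_y l x y H)) as H1. cbv beta in H1; rewrite upd_id in H1.
replace (2*FF x y*Fy l x y) with (INR 2 * Fy l x y * FF x y ^ Init.Nat.pred 2) by (simpl; ring).
exact H1.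
Qed.

Lemma D0 k x y : Cd x y -> dx k (sq FF) x y = 2*FF x y*Fx k x y.
Proof.
intro H; unfold dx, sq. apply is_derive_unique.
pose proof (is_derive_pow _ 2 _ _ (dFx_x k x y H)) as H1. cbv beta in H1; rewrite upd_id in H1.
replace (2*FF x y*Fx k x y) with (INR 2 * Fx k x y * FF x y ^ Init.Nat.pred 2) by (simpl; ring).
exact H1.
Qed.

Lemma D2 i l x y : Cd x y -> dxi i (dxi l (sq FF)) x y = 2*Fy i x y*Fy l x y + 2*FF x y*Fyy i l x y.
Proof.
intro H; unfold dxi at 1. apply is_derive_unique.
apply is_derive_ext_loc with (f := fun t => 2 * FF x (upd y i t) * Fy l x (upd y i t)).
- apply (filter_imp (fun t => Cd x (upd y i t))); [intros t Ht; symmetry; apply D1; exact Ht | apply loc_y; exact H].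
- pose proof (prod2 _ _ _ _ _ (dFy_y i x y H) (dFyy i l x y H)) as Hp.
  cbv beta in Hp; rewrite !upd_id in Hp. exact Hp.
Qed.

Lemma M2 k l x y : Cd x y -> dx k (dxi l (sq FF)) x y = 2*Fx k x y*Fy l x y + 2*FF x y*Fyx k l x y.
Proof.
intro H; unfold dx at 1. apply is_derive_unique.
apply is_derive_ext_loc with (f := fun t => 2 * FF (upd x k t) y * Fy l (upd x k t) y).
- apply (filter_imp (fun t => Cd (upd x k t) y)); [intros t Ht; symmetry; apply D1; exact Ht | apply loc_x; exact H].
- pose proof (prod2 _ _ _ _ _ (dFx_x k x y H) (dFyx k l x y H)) as Hp.
  cbv beta in Hp; rewrite !upd_id in Hp. exact Hp.
Qed.

Lemma r_bounds : 0 < r < 1.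
Proof.
unfold r. assert (H: 1 < exp 2) by (pose proof (exp_ineq1 2); lra).
split.
- apply Rdiv_lt_0_compat; lra.
- apply (Rmult_lt_reg_r (exp 2 + 1)); [lra|]. unfold Rdiv. rewrite Rmult_assoc, Rinv_l; lra.
Qed.

Lemma FF_pos x y : Cd x y -> 0 < FF x y.
Proof.
destruct x as [x1 x2], y as [y1 y2]; unfold Cd, FF, Qv, av, bv, nrm2, inner; cbn [fst snd] in *.
intros [Ha [Hb HQ]]. pose proof r_bounds as [r0 r1].
set (a := r ^ 2 - (x1 * x1 + x2 * x2)) in *.
set (b := 1 - (x1 * x1 + x2 * x2)) in *.
set (s := x1 * y1 + x2 * y2) in *. set (n := y1 * y1 + y2 * y2) in *.
assert (Hn : 0 < n).
{ unfold n. destruct (Req_dec y1 0); destruct (Req_dec y2 0).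
  - subst. unfold s, n in HQ. nra.
  - nra. - nra. - nra. }
set (S := sqrt (a * n + s ^ 2)).
assert (HS : S * S = a * n + s^2) by (apply sqrt_sqrt; nra).
assert (HS0 : 0 <= S) by apply sqrt_pos.
assert (Hc : b - a = 1 - r^2) by (unfold a, b; ring).
assert (Hbc : 0 < 1 - r^2) by nra.
assert (key : (S*b)^2 > ((1-r^2)*s)^2).
{ replace ((S*b)^2) with ((S*S)*b^2) by ring. rewrite HS. rewrite <- Hc.
  assert (0 < a*n*b^2) by (apply Rmult_lt_0_compat; [nra|nra]).
  assert (0 <= s^2*(a*(2*b-a))) by (apply Rmult_le_pos; [nra|nra]). nra. }
assert (Hu : 0 <= S*b) by nra.
assert (key2 : S*b + (1-r^2)*s > 0).
{ set (u := S*b) in *. set (v := (1-r^2)*s) in *.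
  destruct (Rle_or_lt u (-v)); [|lra].
  assert (u*u <= v*v) by nra. nra. }
replace (S / a + (1 - r ^ 2) * s / (a * b)) with ((S*b + (1-r^2)*s)/(a*b)) by (field; lra).
apply Rdiv_lt_0_compat; nra.
Qed.

Definition Kc x y := 2 * sum2 (fun k => Fx k x y * coord y k) / FF x y.

Lemma Hg l x y : Cd x y ->
  gt FF l 0 x y * coord y 0 + gt FF l 1 x y * coord y 1 = FF x y * Fy l x y.
Proof.
intro H. unfold gt. rewrite !(D2 _ _ x y H).
pose proof (euler1 x y H) as E1. pose proof (euler2 l x y H) as E2.
unfold sum2 in E1, E2.
transitivity (Fy l x y * (Fy 0 x y * coord y 0 + Fy 1 x y * coord y 1)
   + FF x y * (Fyy l 0 x y * coord y 0 + Fyy l 1 x y * coord y 1)); [field|].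
rewrite E1, E2. ring.
Qed.

Lemma Hw l x y : Cd x y ->
  dx 0 (dxi l (sq FF)) x y * coord y 0 + dx 1 (dxi l (sq FF)) x y * coord y 1
  - dx l (sq FF) x y = Kc x y * (FF x y * Fy l x y).
Proof.
intro H. rewrite !(M2 _ _ x y H), (D0 _ x y H).
pose proof (hamel l x y H) as E. unfold sum2 in E.
pose proof (FF_pos x y H) as Fp.
unfold Kc, sum2.
transitivity (2 * Fy l x y * (Fx 0 x y * coord y 0 + Fx 1 x y * coord y 1)
   + 2 * FF x y * ((Fyx 0 l x y * coord y 0 + Fyx 1 l x y * coord y 1) - Fx l x y)); [ring|].
rewrite E. field. lra.
Qed.

Lemma G_formula i x y : Cd x y -> (i = 0%nat \/ i = 1%nat) ->
  G FF i x y = / 4 * Kc x y * coord y i * (gdet FF x y / gdet FF x y).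
Proof.
intros H Hi. unfold G, sum2.
rewrite (Hw 0 x y H), (Hw 1 x y H), <- (Hg 0 x y H), <- (Hg 1 x y H).
unfold ginv, gdet.
destruct Hi as [-> | ->]; unfold Rdiv; ring.
Qed.

Lemma Cd0 t : t <> 0 -> Cd (0,0) (t,0).
Proof.
intro Ht. pose proof r_bounds. assert (0 < t*t) by (apply Rsqr_pos_lt; exact Ht).
unfold Cd, Qv, av, bv, nrm2, inner; cbn [fst snd]. assert (0 < r^2 * (t*t)) by (apply Rmult_lt_0_compat; nra). repeat split; nra.
Qed.

Lemma gdet0 t : t <> 0 -> gdet FF (0,0) (t,0) = / r^4.
Proof.
intro Ht. pose proof r_bounds as [r0 r1]. assert (0 < t*t) by (apply Rsqr_pos_lt; exact Ht).
assert (0 < r^2 * (t*t)) by (apply Rmult_lt_0_compat; nra).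
pose proof (Cd0 t Ht) as HC.
unfold gdet, gt. rewrite !(D2 _ _ _ _ HC). clear HC.
prep; simpl. alg.
Qed.

Lemma G0val t : t <> 0 -> G FF 0 (0,0) (t,0) * (2 * Sv (0,0) (t,0)) = cc * t^3.
Proof.
intro Ht. pose proof r_bounds as [r0 r1]. assert (0 < t*t) by (apply Rsqr_pos_lt; exact Ht).
assert (0 < r^2 * (t*t)) by (apply Rmult_lt_0_compat; nra).
pose proof (Cd0 t Ht) as HC.
rewrite (G_formula 0 _ _ HC (or_introl eq_refl)), (gdet0 t Ht).
assert (E : / r^4 / / r^4 = 1) by (field; lra). rewrite E. clear E HC.
unfold Kc, sum2. prep; simpl. alg.
Qed.

Lemma inDK_Cd x y : inDK x -> y <> (0,0) -> Cd x y.
Proof.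
destruct x as [x1 x2], y as [y1 y2]. unfold inDK, Cd, Qv, av, bv, nrm2, inner; cbn [fst snd].
intros Hx Hy. pose proof r_bounds as [r0 r1].
assert (Hp : x1*x1+x2*x2 < r^2).
{ pose proof (sqrt_pos (x1*x1+x2*x2)) as P1.
  assert (P0 : 0 <= x1*x1+x2*x2) by (pose proof (Rle_0_sqr x1); pose proof (Rle_0_sqr x2); unfold Rsqr in *; lra).
  pose proof (sqrt_sqrt (x1*x1+x2*x2) P0) as P2.
  set (w := sqrt (x1*x1+x2*x2)) in *. rewrite <- P2. nra. }
assert (Hn : 0 < y1*y1+y2*y2).
{ destruct (Req_dec y1 0); destruct (Req_dec y2 0).
  - subst. exfalso; apply Hy; reflexivity.
  - nra. - nra. - nra. }
assert (0 < (r^2 - (x1*x1+x2*x2)) * (y1*y1+y2*y2)) by (apply Rmult_lt_0_compat; lra).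
assert (r^2 < 1) by nra.
assert (0 <= (x1*y1+x2*y2)^2) by (apply pow2_ge_0).
repeat split; lra.
Qed.

Theorem corollary4p1 : IsDouglas FF /\ ~ IsBerwald FF.
Proof.
split.
- intros x Hx. exists 0, 0, 0, 0. intros y Hy.
  pose proof (inDK_Cd x y Hx Hy) as HC.
  rewrite (G_formula 0 _ _ HC (or_introl eq_refl)), (G_formula 1 _ _ HC (or_intror eq_refl)).
  destruct y as [y1 y2]; cbn [coord fst snd]. ring.
- intro HB. pose proof r_bounds as [r0 r1].
  assert (H0 : inDK (0,0)).
  { unfold inDK, nrm2, inner; cbn [fst snd]. replace (0*0+0*0) with 0 by ring.
    rewrite sqrt_0. lra. }
  destruct (HB (0,0) H0 0%nat (or_introl eq_refl)) as [c0 [c1 [c2 [c3 [c4 [c5 Hc]]]]]].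
  assert (Hv : forall t, t <> 0 -> 0 < t -> Sv (0,0) (t,0) = r * t /\
     (c0 + c1 * t + c3 * t^2) * (2 * (r*t)) = cc * t^3 /\
     (c0 - c1 * t + c3 * t^2) * (2 * (r*t)) = - cc * t^3).
  { intros t Ht Htp.
    assert (HS : forall u, u <> 0 -> 0 < u*u -> Sv (0,0) (u,0) = r * Rabs u).
    { intros u Hu Huu. unfold Sv, Qv, av, nrm2, inner; cbn [fst snd].
      replace ((r ^ 2 - (0 * 0 + 0 * 0)) * (u * u + 0 * 0) + (0 * u + 0 * 0) ^ 2)
        with ((r * Rabs u)^2).
      - apply sqrt_pow2. pose proof (Rabs_pos u). nra.
      - rewrite Rpow_mult_distr. rewrite <- (Rabs_pos_eq (u*u)) at 1 by nra.
        rewrite Rabs_mult. ring. }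
    assert (Ht2 : -t <> 0) by lra.
    pose proof (G0val t Ht) as G1. pose proof (G0val (-t) Ht2) as G2.
    rewrite (HS t Ht ltac:(nra)) in G1. rewrite (HS (-t) Ht2 ltac:(nra)) in G2.
    rewrite Rabs_Ropp in G2. rewrite Rabs_pos_eq in G1, G2 by lra.
    rewrite (Hc (t,0)) in G1 by (intro E; injection E; lra).
    rewrite (Hc (-t,0)) in G2 by (intro E; injection E; lra).
    cbn [fst snd] in G1, G2.
    split; [rewrite HS by nra; rewrite Rabs_pos_eq by lra; reflexivity|].
    split; [rewrite <- G1; ring | ]. 
    replace (- cc * t ^ 3) with (cc * (-t)^3) by ring. rewrite <- G2. ring. }
  destruct (Hv 1 ltac:(lra) ltac:(lra)) as [_ [A1 A2]].
  destruct (Hv 2 ltac:(lra) ltac:(lra)) as [_ [B1 B2]].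
  assert (Hcc : 0 < cc) by (unfold cc; nra).
  assert (E1 : 4 * c1 * r = 2 * cc) by nra.
  assert (E2 : 16 * c1 * r = 16 * cc) by nra.
  nra.
Qed.
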